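(* Let $H$ be a (simple) graph containing no cycle of length 5, and let $C$ be a shortest odd cycle of length at least $7$ in $H$ (i.e. an odd cycle of minimum length among odd cycles of length $\geq 7$). Then $C$ contains an edge $v_1v_2$ and a vertex $w$ opposite to it on $C$ such that $C$ is the union of the edge $v_1v_2$, a shortest $v_1$–$w$ path in $H$, and a shortest $v_2$–$w$ path in $H$.
   Context: Cycles are subgraphs, not necessarily induced. The length of a path or cycle is its number of edges. For a cycle of length $2k+1$, the vertex $w$ opposite the edge $v_1v_2$ is the vertex at distance $k$ along the cycle from both $v_1$ and $v_2$. *)

(* Defs.v *)
From mathcomp Require Import all_boot.
Set Implicit Arguments. Unset Strict Implicit. Unset Printing Implicit Defensive.

Section Graphs.
Variable T : finType.

Definition simple_graph (e : rel T) : Prop := symmetric e /\ irreflexive e.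

(* A path (no repeated vertices) from x to y, given as its vertex sequence
   p = [:: x; ...; y]; its length is size p - 1 (number of edges). *)
Definition is_path (e : rel T) (x y : T) (p : seq T) : Prop :=
  exists q, p = x :: q /\ path e x q /\ last x q = y /\ uniq p.

Definition shortest_path (e : rel T) (x y : T) (p : seq T) : Prop :=
  is_path e x y p /\ forall q, is_path e x y q -> size p <= size q.

(* A cycle (subgraph, not necessarily induced) given by its cyclic vertex
   sequence of distinct vertices; its length is size c. *)
Definition is_cycle (e : rel T) (c : seq T) : Prop :=
  uniq c /\ 3 <= size c /\ cycle e c.

Definition pedge (p : seq T) (u v : T) : bool :=
  ((u, v) \in zip p (behead p)) || ((v, u) \in zip p (behead p)).

Definition cedge (c : seq T) (u v : T) : bool :=
  [&& u \in c, v \in c & (next c u == v) || (next c v == u)].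

Definition cdist (c : seq T) (x y : T) : nat :=
  let i := index x c in let j := index y c in let L := size c in
  minn ((j + L - i) %% L) ((i + L - j) %% L).

Definition opposite (c : seq T) (v1 v2 w : T) : Prop :=
  exists k, size c = k.*2.+1 /\ w \in c /\ cdist c v1 w = k /\ cdist c v2 w = k.

End Graphs.

(* Main.v *)
Require Import Defs.
From mathcomp Require Import all_boot.
From mathcomp Require Import zify.
Set Implicit Arguments. Unset Strict Implicit. Unset Printing Implicit Defensive.

Lemma modL x n : x < n + n -> (x %% n = x /\ x < n) \/ (x %% n = x - n /\ n <= x).
Proof.
case: (ltnP x n) => h1 h2; first by left; rewrite modn_small.
right; split => //. rewrite -{1}(subnK h1) modnDr modn_small //. lia.
Qed.

Arguments modL : clear implicits.
Lemma mod_inj n s i j : s <= i < s + n -> s <= j < s + n -> i %% n = j %% n -> i = j.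
Proof.
move=> hi hj h.
wlog le: i j hi hj h / i <= j.
  move=> W; case: (leqP i j) => hh; first exact: W.
  by symmetry; apply: W => //; apply: ltnW.
have : n %| j - i by rewrite -eqn_mod_dvd // h.
case: (posnP (j - i)) => [|pos]; first lia.
move/(dvdn_leq pos) => ?; lia.
Qed.

Ltac msplit := repeat match goal with
 | |- context [?x %% ?m] =>
    lazymatch x with context [_ %% _] => fail | _ => idtac end;
    have [[-> ?]|[-> ?]] := modL x m ltac:(lia)
 end.

Lemma ar1 n s t j : 0 < n -> s < n -> t < n -> minn ((s + n - t) %% n) ((t + n - s) %% n) <= j ->
  minn t (n.-1 - t) <= minn s (n.-1 - s) + j.
Proof. move=> n0 hs ht. msplit; lia. Qed.
Lemma ar2 n s t : 7 <= n -> s < n -> t < n -> (t + n - s) %% n = 2 ->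
  (s.+1 %% n = 0 \/ s.+1 %% n = n.-1) ->
  minn t (n.-1 - t) <= minn s (n.-1 - s) + 1.
Proof. move=> n0 hs ht. msplit; lia. Qed.
Lemma ar2' n s t : 7 <= n -> s < n -> t < n -> (s + n - t) %% n = 2 ->
  (t.+1 %% n = 0 \/ t.+1 %% n = n.-1) ->
  minn t (n.-1 - t) <= minn s (n.-1 - s) + 1.
Proof. move=> n0 hs ht. msplit; lia. Qed.
Lemma ar3 n s : 7 <= n -> s < n -> (s.+1 + n.-1) %% n = s %% n.
Proof. move=> n0 hs. msplit; lia. Qed.
Lemma ar4 n s t : 7 <= n -> s < n -> t < n -> (t + n - s) %% n = 2 -> s.+2 %% n = t %% n.
Proof. move=> n0 hs ht. msplit; lia. Qed.

Lemma ar_cd1 n k b : n = k.*2.+1 -> b < n ->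
  minn (((k + b) %% n + n - (0 + b) %% n) %% n) (((0 + b) %% n + n - (k + b) %% n) %% n) = k.
Proof. move=> hn hb. msplit. all: lia. Qed.
Lemma ar_cd2 n k b : n = k.*2.+1 -> b < n ->
  minn (((k + b) %% n + n - (k.*2 + b) %% n) %% n) (((k.*2 + b) %% n + n - (k + b) %% n) %% n) = k.
Proof. move=> hn hb. msplit. all: lia. Qed.


Lemma ar_sum n s t : s < n -> t < n -> s != t ->
  (s + n - t) %% n + (t + n - s) %% n = n /\ (0 < (s + n - t) %% n < n /\ 0 < (t + n - s) %% n < n).
Proof. move=> hs ht /eqP st. msplit; lia. Qed.
Lemma ar_g n s t : s < n -> t < n -> (t + (s + n - t) %% n) %% n = s %% n.
Proof. move=> hs ht. msplit; lia. Qed.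
Lemma ltn_cat_r x y m : x + y.+1 < m.+1 -> y < m.
Proof. lia. Qed.

Lemma ch1 n c c' : 7 <= n -> c < n -> c' < n ->
  let d := (c' + c.+1 %% n) %% n in
  (d = c \/ c = d.+1 %% n \/ d = c.+1 %% n) ->
  (d = c.+1 %% n \/ c.+1 %% n = d.+1 %% n \/ d = (c.+1 %% n).+1 %% n) ->
  c' = 0 \/ c' = n.-1.
Proof. move=> n7 hc hc' d; rewrite /d. msplit; lia. Qed.
Lemma ch2 n c c' : 7 <= n -> c < n -> c' < n ->
  let d := (c' + c) %% n in
  (d = c \/ c = d.+1 %% n \/ d = c.+1 %% n) -> d != c.+1 %% n ->
  c' = 0 \/ c' = n.-1.
Proof. move=> n7 hc hc' d; rewrite /d. msplit; lia. Qed.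

Section Main.
Variables (T : finType) (e : rel T) (C : seq T).
Hypothesis esym : symmetric e.
Hypothesis eirr : irreflexive e.
Hypothesis noC5 : ~ (exists c, is_cycle e c /\ size c = 5).
Hypothesis Ccyc : is_cycle e C.
Hypothesis Codd : odd (size C).
Hypothesis C7 : 7 <= size C.
Hypothesis Cmin : forall c, is_cycle e c -> odd (size c) -> 7 <= size c -> size C <= size c.
Local Notation n := (size C).
Variable x0 : T.
Variable b0 : nat.
Hypothesis b0n : b0 < n.

Definition g i := nth x0 C ((i + b0) %% n).
Definition pos x := (index x C + n - b0) %% n.

Lemma n_gt0 : 0 < n. Proof. lia. Qed.
Lemma Cuniq : uniq C. Proof. by case: Ccyc. Qed.
Lemma Ccycle : cycle e C. Proof. by case: Ccyc => _ []. Qed.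

Lemma g_mod i : g (i %% n) = g i.
Proof. by rewrite /g modnDml. Qed.

Lemma g_eqmod i j : i %% n = j %% n -> g i = g j.
Proof. by move=> h; rewrite -g_mod h g_mod. Qed.
Lemma gDn i : g (i + n) = g i.
Proof. by rewrite -g_mod modnDr g_mod. Qed.
Lemma g_in i : g i \in C.
Proof. by rewrite /g mem_nth // ltn_pmod // n_gt0. Qed.
Lemma pos_lt x : pos x < n.
Proof. by rewrite /pos ltn_pmod // n_gt0. Qed.
Lemma index_g i : index (g i) C = (i + b0) %% n.
Proof. by rewrite /g index_uniq ?Cuniq // ltn_pmod // n_gt0. Qed.
Lemma pos_g i : pos (g i) = i %% n.
Proof.
rewrite /pos index_g.
have hi := ltn_pmod i n_gt0.
rewrite {1}(divn_eq i n) -addnA modnMDl.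
have [[-> ?]|[-> ?]] := modL (i %% n + b0) n ltac:(lia).
  have [[-> ?]|[-> ?]] := modL (i %% n + b0 + n - b0) n ltac:(lia); lia.
have [[-> ?]|[-> ?]] := modL (i %% n + b0 - n + n - b0) n ltac:(lia); lia.
Qed.
Lemma g_pos x : x \in C -> g (pos x) = x.
Proof.
move=> xC; rewrite /g /pos.
have hi : index x C < n by rewrite index_mem.
have [[-> ?]|[-> ?]] := modL (index x C + n - b0) n ltac:(lia).
  have [[-> ?]|[-> ?]] := modL (index x C + n - b0 + b0) n ltac:(lia);
  (transitivity (nth x0 C (index x C)); [congr (nth _ _ _); lia | exact: nth_index]).
have [[-> ?]|[-> ?]] := modL (index x C + n - b0 - n + b0) n ltac:(lia);
  (transitivity (nth x0 C (index x C)); [congr (nth _ _ _); lia | exact: nth_index]).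
Qed.
Lemma g_inj i j : g i = g j -> i %% n = j %% n.
Proof. by move=> h; rewrite -!pos_g h. Qed.
Lemma g_next i : next C (g i) = g i.+1.
Proof.
rewrite next_nth g_in index_g /g.
case: C n_gt0 Cuniq => [//|y p] /= _ _.
have := ltn_pmod (i + b0) (isT : 0 < (size p).+1).
set j := (i + b0) %% (size p).+1 => hj.
rewrite addSn -addn1 -modnDml -/j addn1.
case: (ltnP j.+1 (size p).+1) => h.
  by rewrite modn_small //=; apply: set_nth_default; lia.
have -> : j = size p by lia.
by rewrite modnn nth_default.
Qed.
Lemma g_e i : e (g i) (g i.+1).
Proof. by rewrite -g_next; apply: next_cycle; [exact: Ccycle | exact: g_in]. Qed.


Lemma arc_path s l : path e (g s) (map g (iota s.+1 l)).
Proof. by elim: l s => //= l IH s; rewrite g_e IH. Qed.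
Lemma arc_last s l : last (g s) (map g (iota s.+1 l)) = g (s + l).
Proof. elim: l s => [|l IH] s /=; first by rewrite addn0. by rewrite IH addnS. Qed.
Lemma arc_uniq s L : uniq L -> (forall i, i \in L -> s <= i < s + n) -> uniq (map g L).
Proof.
move=> uL hL; rewrite map_inj_in_uniq // => i j hi hj /g_inj; apply: mod_inj; exact: hL.
Qed.
Lemma mem_arc x s l : x \in map g (iota s l) -> exists i, s <= i < s + l /\ x = g i.
Proof. by case/mapP => i; rewrite mem_iota => hi ->; exists i. Qed.
Lemma arc_sub x L : x \in map g L -> x \in C.
Proof. by case/mapP => i _ ->; exact: g_in. Qed.
Lemma iotaSr t l : iota t l.+1 = rcons (iota t l) (t + l).
Proof. by rewrite -addn1 iotaD cats1. Qed.

Lemma bridge_cycle a r t l : path e a (rcons r (g t)) -> uniq (a :: rcons r (g t)) ->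
  (forall x, x \in r -> x \notin C) -> a = g (t + l) -> l < n -> 3 <= (size r).+1 + l ->
  is_cycle e (a :: r ++ map g (iota t l)).
Proof.
move=> pQ uQ rC ha ln s3.
have [ar ur] : a \notin r /\ uniq r.
  move: uQ; rewrite /= rcons_uniq mem_rcons inE negb_or => /andP[/andP[_ ->] /andP[_ ->]].
  by [].
split; [|split].
- rewrite cons_uniq cat_uniq mem_cat negb_or ar ur /=.
  apply/and3P; split.
  + apply/negP => /mem_arc [i [hi hai]].
    move: hai; rewrite ha => /g_inj /(mod_inj (s := t)) h.
    have := h ltac:(lia) ltac:(lia); lia.
  + apply/hasPn => x /arc_sub xC; apply/negP => /rC; by rewrite xC.
  + apply: (arc_uniq (s := t)); first exact: iota_uniq.
    move=> i; rewrite mem_iota; lia.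
- by rewrite /= size_cat size_map size_iota; lia.
- rewrite /= rcons_cat cat_path.
  move: pQ; rewrite rcons_path => /andP[-> el] /=.
  rewrite ha -map_rcons -iotaSr /=.
  by rewrite -ha el arc_path.
Qed.

Lemma path_rev_sym a r b : path e a (rcons r b) -> path e b (rcons (rev r) a).
Proof.
move=> h; have := h; rewrite -(eq_path (e := fun z => e^~ z)); last by move=> x y /=; rewrite esym.
by rewrite -rev_path last_rcons belast_rcons rev_cons.
Qed.

Lemma small_odd c : is_cycle e c -> odd (size c) -> size c < n -> size c = 3.
Proof.
move=> hc ho hl.
have h3 : 3 <= size c by case: hc => _ [].
case: (leqP 7 (size c)) => h7; first by have := Cmin hc ho h7; lia.
have h5 : size c != 5 by apply/eqP => h5; apply: noC5; exists c.
move: ho h3 h7 h5; case: (size c) => [|[|[|[|[|[|[|m]]]]]]] //.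
Qed.

Definition fd x y := (pos y + n - pos x) %% n.

Lemma bridge a b r : a \in C -> b \in C -> a != b -> path e a (rcons r b) ->
  uniq (a :: rcons r b) -> (forall x, x \in r -> x \notin C) ->
  minn (fd b a) (fd a b) <= (size r).+1 \/
  ((size r).+1 = 1 /\ minn (fd b a) (fd a b) = 2).
Proof.
move=> aC bC ab pQ uQ rC.
have ha : a = g (pos a) by rewrite g_pos.
have hb : b = g (pos b) by rewrite g_pos.
have st : pos a != pos b by apply: contraNneq ab => h; rewrite ha hb h.
have hs := pos_lt a; have ht := pos_lt b.
rewrite /fd.
move: (pos a) (pos b) ha hb st hs ht => s t ha hb st hs ht.
set dA := (s + n - t) %% n; set dB := (t + n - s) %% n.
have [hsum [hA hB] ] : dA + dB = n /\ (0 < dA < n /\ 0 < dB < n) := ar_sum hs ht st.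
have gA : g (t + dA) = a by rewrite ha; apply: g_eqmod; apply: ar_g.
have gB : g (s + dB) = b by rewrite hb; apply: g_eqmod; apply: ar_g.
clearbody dA dB.
case: (leqP (minn dA dB) (size r).+1) => hm; first by left.
right.
have cA : size r < n - dA -> is_cycle e (a :: r ++ map g (iota t dA)).
  move=> hh; apply: bridge_cycle => //; rewrite -?hb //; lia.
have cB : size r < n - dB -> is_cycle e (b :: rev r ++ map g (iota s dB)).
  move=> hh; apply: bridge_cycle; rewrite -?ha ?gB ?size_rev //; try lia.
  - by apply: path_rev_sym.
  - have := uQ; rewrite -rev_uniq rev_cons rev_rcons. done.
  - by move=> x; rewrite mem_rev; apply: rC.
have sA : size (a :: r ++ map g (iota t dA)) = (size r).+1 + dA.
  by rewrite /= size_cat size_map size_iota.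
have sB : size (b :: rev r ++ map g (iota s dB)) = (size r).+1 + dB.
  by rewrite /= size_cat size_map size_iota size_rev.
case hoA : (odd ((size r).+1 + dA)).
  have := small_odd (cA ltac:(lia)); rewrite sA => h; have := h hoA ltac:(lia); lia.
have hoB : odd ((size r).+1 + dB).
  have : odd (((size r).+1 + dA) + ((size r).+1 + dB)).
    have -> : ((size r).+1 + dA) + ((size r).+1 + dB) = ((size r).+1).*2 + n by lia.
    by rewrite oddD odd_double.
  by rewrite oddD hoA.
have := small_odd (cB ltac:(lia)); rewrite sB => h; have := h hoB ltac:(lia); lia.
Qed.

Definition center c := e (g (c + n.-1)) (g c.+1).

Lemma centers_adj_lt c1 c2 : c1 < c2 -> c2 < n -> center c1 -> center c2 ->
  c2 = c1.+1 \/ (c1 = 0 /\ c2 = n.-1).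
Proof.
move=> h12 h2n ce1 ce2.
case: (eqVneq c2 c1.+1) => [->|ne1]; first by left.
case: (boolP ((c1 == 0) && (c2 == n.-1))) => [/andP[/eqP-> /eqP->]|nz]; first by right.
exfalso.
all: have [l1 hl1] : exists l1, c2 - c1 - 1 = l1.+1 by exists (c2 - c1 - 2); move/eqP: ne1; lia.
all: have [l2 hl2] : exists l2, n + c1 - c2 - 1 = l2.+1 by exists (n + c1 - c2 - 2);
       lia.
all: set c' := map g (iota c1.+1 l1.+1) ++ map g (iota c2.+1 l2.+1).
all: have cc : is_cycle e c'.
all: try (split; [|split]).
all: try (rewrite /c' -map_cat; apply: (arc_uniq (s := c1.+1));
   [ rewrite cat_uniq !iota_uniq /= andbT; apply/hasPn => i; rewrite !mem_iota; lia
   | move=> i; rewrite mem_cat !mem_iota; lia]).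
all: try (rewrite /c' size_cat !size_map !size_iota; lia).
all: try (rewrite /c' /= rcons_cat cat_path arc_path arc_last /= rcons_path arc_path arc_last;
  apply/and3P; split;
  [ have -> : g (c1.+1 + l1) = g (c2 + n.-1) by rewrite -gDn; congr g; lia
  | have -> : g (c2.+1 + l2) = g (c1 + n.-1) by congr g; lia ] => //).
all: try (have := small_odd cc; rewrite /c' size_cat !size_map !size_iota => h;
  have := h ltac:(rewrite (_ : l1.+1 + l2.+1 = n.-2); [rewrite -subn2 oddB ?Codd //; lia| lia]) ltac:(lia);
  lia).
all: [> rewrite /c' -map_cat; apply: (arc_uniq (s := c1.+1)) | ].
- rewrite cat_uniq !iota_uniq andbT andTb; apply/hasPn => x; rewrite !mem_iota; lia.
- move=> x; rewrite mem_cat !mem_iota; lia.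
- rewrite /c' /= rcons_cat cat_path arc_path arc_last /=.
  rewrite rcons_path arc_path arc_last.
  have -> : g (c1.+1 + l1) = g (c2 + n.-1) by rewrite -gDn; congr g; lia.
  have -> : g (c2.+1 + l2) = g (c1 + n.-1) by congr g; lia.
  by move: ce1 ce2; rewrite /center => -> ->.
Qed.



Lemma centers_adj c1 c2 : c1 < n -> c2 < n -> center c1 -> center c2 ->
  c1 = c2 \/ c2 = c1.+1 %% n \/ c1 = c2.+1 %% n.
Proof.
move=> h1 h2 ce1 ce2.
case: (ltngtP c1 c2) => h.
- case: (centers_adj_lt h h2 ce1 ce2) => [hh|[-> ->]]; right.
    by left; rewrite hh modn_small // -hh.
  by right; rewrite prednK ?modnn // n_gt0.
- case: (centers_adj_lt h h1 ce2 ce1) => [hh|[-> ->]]; right.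
    by right; rewrite hh modn_small // -hh.
  by left; rewrite prednK ?modnn // n_gt0.
- by left.
Qed.

Lemma center_mod c : center (c %% n) = center c.
Proof.
rewrite /center; congr e; apply: g_eqmod.
  by rewrite modnDml.
by rewrite -addn1 modnDml addn1.
Qed.

Hypothesis allowed : forall c, c < n -> center c -> c = 0 \/ c = n.-1.

Definition tent u := minn u (n.-1 - u).
Definition psi x := tent (pos x).

Lemma psi_step a b r : a \in C -> b \in C -> a != b -> path e a (rcons r b) ->
  uniq (a :: rcons r b) -> (forall x, x \in r -> x \notin C) ->
  psi b <= psi a + (size r).+1.
Proof.
move=> aC bC ab pQ uQ rC.
have := bridge aC bC ab pQ uQ rC.
have ha : a = g (pos a) by rewrite g_pos.
have hb : b = g (pos b) by rewrite g_pos.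
rewrite /psi /tent /fd.
have hs := pos_lt a; have ht := pos_lt b.
case; first by apply: ar1 => //; exact: n_gt0.
case=> /eqP; rewrite eqSS size_eq0 => /eqP r0 hm.
move: pQ; rewrite r0 /= andbT => eab.
have hcs : (pos b + n - pos a) %% n = 2 -> (pos a).+1 %% n = 0 \/ (pos a).+1 %% n = n.-1.
  move=> h2; apply: allowed; first by rewrite ltn_pmod // n_gt0.
  rewrite center_mod /center.
  have e1 : g ((pos a).+1 + n.-1) = a by rewrite [RHS]ha; apply: g_eqmod; apply: ar3.
  have e2 : g (pos a).+1.+1 = b by rewrite [RHS]hb; apply: g_eqmod; apply: ar4.
  by rewrite e1 e2.
have hct : (pos a + n - pos b) %% n = 2 -> (pos b).+1 %% n = 0 \/ (pos b).+1 %% n = n.-1.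
  move=> h2; apply: allowed; first by rewrite ltn_pmod // n_gt0.
  rewrite center_mod /center esym.
  have e1 : g ((pos b).+1 + n.-1) = b by rewrite [RHS]hb; apply: g_eqmod; apply: ar3.
  have e2 : g (pos b).+1.+1 = a by rewrite [RHS]ha; apply: g_eqmod; apply: ar4.
  by rewrite e1 e2.
case: (eqVneq ((pos b + n - pos a) %% n) 2) => h2.
  by apply: ar2 => //; apply: hcs.
have h2' : (pos a + n - pos b) %% n = 2.
  by move: hm h2; rewrite /minn; case: ifP => _ // ->; rewrite eqxx.
by apply: ar2' => //; apply: hct.
Qed.


Lemma split_first (q : seq T) : has (mem C) q ->
  exists r b rest, q = r ++ b :: rest /\ b \in C /\ (forall x, x \in r -> x \notin C).
Proof.
elim: q => //= y q IH.
case yC: (y \in C) => /=.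
  by move=> _; exists [::], y, q.
case/IH => r [b [rest [-> [bC rC]]]].
exists (y :: r), b, rest; split => //; split => // x.
by rewrite inE => /orP[/eqP->|/rC]; rewrite ?yC.
Qed.

Lemma psi_path q a : a \in C -> path e a q -> uniq (a :: q) -> last a q \in C ->
  psi (last a q) <= psi a + size q.
Proof.
have [m] := ubnP (size q); elim: m q a => // m IH q a hm aC pq uq lC.
case: q hm pq uq lC => [|y q'] hm pq uq lC; first by rewrite addn0.
have : has (mem C) (y :: q').
  by apply/hasP; exists (last a (y :: q'))=> //=; exact: mem_last.
case/split_first => r [b [rest [hq [bC rC]]]].
rewrite hq in pq uq hm lC *.
move: pq; rewrite cat_path /= => /and3P[pr eb prest].
have u2 : uniq ((a :: rcons r b) ++ rest) by rewrite cat_cons cat_rcons.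
have ab : a != b.
  by apply/eqP => hab; move: uq; rewrite hab /= mem_cat inE eqxx orbT.
have st := @psi_step a b r aC bC ab ltac:(by rewrite rcons_path pr eb)
  ltac:(by move: u2; rewrite cat_uniq => /andP[]) rC.
have ub : uniq (b :: rest).
  by move: uq; rewrite cons_uniq cat_uniq => /andP[_ /and3P[_ _ ->]].
rewrite last_cat /=.
have := IH rest b ltac:(rewrite size_cat /= in hm; exact: ltn_cat_r hm) bC prest ub.
rewrite last_cat /= in lC => /(_ lC).
rewrite size_cat /= => hh; apply: (leq_trans hh); apply: leq_trans (leq_add st (leqnn (size rest))) _.
by rewrite -addnA leq_add2l addSn addnS.
Qed.

Lemma zbE (p : seq T) u v : (u, v) \in zip p (behead p) ->
  exists2 i, i.+1 < size p & u = nth x0 p i /\ v = nth x0 p i.+1.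
Proof.
case: p => [|y p] //=.
elim: p y => [|z p IH] y //=.
rewrite inE => /orP[/eqP[-> ->]|/IH [i hi h]]; first by exists 0.
by exists i.+1.
Qed.
Lemma zbI (p : seq T) i : i.+1 < size p -> (nth x0 p i, nth x0 p i.+1) \in zip p (behead p).
Proof.
case: p => [|y p] //=.
elim: p y i => [|z p IH] y [|i] //= h; first by rewrite inE eqxx.
by rewrite inE IH ?orbT.
Qed.
Lemma pedge_sym (p : seq T) u v : pedge p u v = pedge p v u.
Proof. by rewrite /pedge orbC. Qed.
Lemma pedgeE (p : seq T) u v : pedge p u v -> exists2 i, i.+1 < size p &
  (u = nth x0 p i /\ v = nth x0 p i.+1) \/ (v = nth x0 p i /\ u = nth x0 p i.+1).
Proof.
by case/orP => /zbE [i hi h]; exists i => //; [left|right].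
Qed.
Lemma pedgeI (p : seq T) i : i.+1 < size p -> pedge p (nth x0 p i) (nth x0 p i.+1).
Proof. by move=> h; rewrite /pedge zbI. Qed.

Lemma cedgeE u v : cedge C u v ->
  exists i, (u = g i /\ v = g i.+1) \/ (v = g i /\ u = g i.+1).
Proof.
case/and3P => uC vC /orP[] /eqP <-.
  by exists (pos u); left; rewrite -g_next g_pos.
by exists (pos v); right; rewrite -g_next g_pos.
Qed.
Lemma cedgeI i : cedge C (g i) (g i.+1).
Proof. by rewrite /cedge !g_in g_next eqxx. Qed.
Lemma cedge_sym u v : cedge C u v = cedge C v u.
Proof. by rewrite /cedge andbCA orbC. Qed.

Lemma arc_is_path s l : l < n -> is_path e (g s) (g (s + l)) (map g (iota s l.+1)).
Proof.
move=> ln; exists (map g (iota s.+1 l)); split => //; split; first exact: arc_path.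
split; first exact: arc_last.
apply: (arc_uniq (s := s)); first exact: iota_uniq.
move=> i; rewrite mem_iota; lia.
Qed.

Lemma is_path_rev x y p : is_path e x y p -> is_path e y x (rev p).
Proof.
case=> q [-> [pq [lq uq]]].
case/lastP: q pq lq uq => [|q z] pq lq uq.
  by rewrite /= in lq; rewrite lq; exists [::].
rewrite last_rcons in lq; subst z.
exists (rcons (rev q) x); split.
  by rewrite rev_cons rev_rcons.
split; first exact: path_rev_sym.
split; first by rewrite last_rcons.
by rewrite rev_uniq.
Qed.

Lemma path_lower x y p : x \in C -> y \in C -> is_path e x y p -> psi y <= psi x + (size p).-1.
Proof.
move=> xC yC [q [-> [pq [lq uq]]]].
by rewrite -lq /=; apply: psi_path => //; rewrite lq.
Qed.

Lemma key : exists v1 v2 w P1 P2,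
    [/\ cedge C v1 v2, opposite C v1 v2 w,
        shortest_path e v1 w P1, shortest_path e v2 w P2 &
        ((forall x, (x \in C) = [|| x == v1, x == v2, x \in P1 | x \in P2]) /\
        (forall u v, cedge C u v =
           [|| (u == v1) && (v == v2), (u == v2) && (v == v1),
               pedge P1 u v | pedge P2 u v]))].
Proof.
set k := n./2.
have hn : n = k.*2.+1 by rewrite -[LHS](odd_double_half n) Codd add1n.
have k3 : 3 <= k by lia.
set P1 := map g (iota 0 k.+1).
set P2 := rev (map g (iota k k.+1)).
have sP1 : size P1 = k.+1 by rewrite size_map size_iota.
have sP2 : size P2 = k.+1 by rewrite size_rev size_map size_iota.
have nP1 i : i <= k -> nth x0 P1 i = g i.
  by move=> hi; rewrite (nth_map 0) ?size_iota // nth_iota.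
have nP2 i : i <= k -> nth x0 P2 i = g (k + (k - i)).
  move=> hi; rewrite nth_rev ?size_map ?size_iota // (nth_map 0) ?size_iota ?nth_iota //;
    lia.
have psik : psi (g k) = k by rewrite /psi pos_g modn_small /tent; lia.
have psi0 : psi (g 0) = 0 by rewrite /psi pos_g mod0n /tent; lia.
have psi2k : psi (g k.*2) = 0 by rewrite /psi pos_g modn_small /tent; lia.
have gn : g k.*2.+1 = g 0 by rewrite (_ : k.*2.+1 = 0 + n) ?gDn // hn.
have ce : cedge C (g 0) (g k.*2) by rewrite cedge_sym -gn cedgeI.
have Rsym u v : [|| (u == g 0) && (v == g k.*2), (u == g k.*2) && (v == g 0),
               pedge P1 u v | pedge P2 u v] ->
   [|| (v == g 0) && (u == g k.*2), (v == g k.*2) && (u == g 0),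
               pedge P1 v u | pedge P2 v u].
  case/or4P => [/andP[/eqP-> /eqP->]|/andP[/eqP-> /eqP->]|h|h];
    by rewrite ?eqxx ?orbT // ?(pedge_sym _ v u) h ?orbT.
exists (g 0); exists (g k.*2); exists (g k); exists P1; exists P2.
split.
- exact: ce.
- exists k; split => //; split; first exact: g_in.
  rewrite /cdist /= !index_g; split; [apply: ar_cd1 | apply: ar_cd2] => //.
- split; first by have := arc_is_path 0 (ltac:(lia) : k < n); rewrite add0n.
  move=> q hq; have := path_lower (g_in 0) (g_in k) hq; rewrite psik psi0 sP1; lia.
- split.
    have := is_path_rev (arc_is_path k (ltac:(lia) : k < n)); by rewrite addnn.
  move=> q hq; have := path_lower (g_in k.*2) (g_in k) hq; rewrite psik psi2k sP2; lia.
split.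
- move=> x; apply/idP/idP.
  + move=> xC; rewrite -(g_pos xC); have := pos_lt x; move: (pos x) => p hp.
    case: (leqP p k) => hk; apply/or4P.
      by apply: Or43; rewrite /P1 map_f // mem_iota; lia.
    by apply: Or44; rewrite /P2 mem_rev map_f // mem_iota; lia.
  + case/or4P => [/eqP->|/eqP->|/arc_sub //|]; rewrite ?g_in //.
    by rewrite /P2 mem_rev; exact: arc_sub.
- move=> u v; apply/idP/idP.
  + have H i : i < n -> [|| (g i == g 0) && (g i.+1 == g k.*2), (g i == g k.*2) && (g i.+1 == g 0),
               pedge P1 (g i) (g i.+1) | pedge P2 (g i) (g i.+1)].
      move=> hi; case: (ltnP i k) => h1.
        have hh := @pedgeI P1 i ltac:(rewrite sP1; lia).
        rewrite (nP1 i ltac:(lia)) (nP1 i.+1 ltac:(lia)) in hh.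
        by rewrite hh !orbT.
      case: (ltnP i k.*2) => h2.
        have hh := @pedgeI P2 (k.*2 - i.+1) ltac:(rewrite sP2; lia).
        rewrite (nP2 (k.*2 - i.+1) ltac:(lia)) (nP2 (k.*2 - i.+1).+1 ltac:(lia)) in hh.
        rewrite (_ : k + (k - (k.*2 - i.+1)) = i.+1) in hh; last lia.
        rewrite (_ : k + (k - (k.*2 - i.+1).+1) = i) in hh; last lia.
        by rewrite (pedge_sym P2) hh !orbT.
      have -> : i = k.*2 by lia.
      by rewrite gn !eqxx orbT.
    have Hm i : [|| (g i == g 0) && (g i.+1 == g k.*2), (g i == g k.*2) && (g i.+1 == g 0),
               pedge P1 (g i) (g i.+1) | pedge P2 (g i) (g i.+1)].
      rewrite -g_mod (_ : g i.+1 = g (i %% n).+1); first by apply: H; rewrite ltn_pmod // n_gt0.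
      by apply: g_eqmod; rewrite -[i.+1]addn1 -[(i %% n).+1]addn1 modnDml.
    by case/cedgeE => i [[-> ->]|[-> ->]] //; apply: Rsym.
  + case/or4P => [/andP[/eqP-> /eqP->]|/andP[/eqP-> /eqP->]|h|h].
    * exact: ce.
    * by rewrite cedge_sym.
    * case/pedgeE: h => i; rewrite sP1 => hi.
      by rewrite !nP1; try lia; case=> [[-> ->]|[-> ->]]; rewrite ?cedgeI // cedge_sym cedgeI.
    * case/pedgeE: h => i; rewrite sP2 => hi.
      rewrite !nP2; try lia.
      rewrite (_ : k + (k - i) = (k + (k - i.+1)).+1); last lia.
      by case=> [[-> ->]|[-> ->]]; rewrite ?cedgeI // cedge_sym cedgeI.
Qed.

End Main.

Lemma center_shift (T : finType) (e : rel T) (C : seq T) x0 b0 c :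
  center e C x0 b0 c = center e C x0 0 (c + b0).
Proof. by rewrite /center /g !addn0 addnAC addSn. Qed.

Theorem mainTheorem8 (T : finType) (e : rel T) (C : seq T) :
  simple_graph e ->
  (* H contains no cycle of length 5 *)
  ~ (exists c, is_cycle e c /\ size c = 5) ->
  (* C is a shortest odd cycle of length at least 7 *)
  is_cycle e C -> odd (size C) -> 7 <= size C ->
  (forall c, is_cycle e c -> odd (size c) -> 7 <= size c -> size C <= size c) ->
  exists v1 v2 w P1 P2,
    [/\ cedge C v1 v2, opposite C v1 v2 w,
        shortest_path e v1 w P1, shortest_path e v2 w P2 &
        ((forall x, (x \in C) = [|| x == v1, x == v2, x \in P1 | x \in P2]) /\
        (forall u v, cedge C u v =
           [|| (u == v1) && (v == v2), (u == v2) && (v == v1),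
               pedge P1 u v | pedge P2 u v]))].
Proof.
move=> [esym eirr] noC5 Ccyc Codd C7 Cmin.
have n0 : 0 < size C by apply: leq_trans C7.
have [x0 _] : exists x, x \in C.
  by case: C n0 {Ccyc Codd C7 Cmin} => [|x s] // _; exists x; rewrite inE eqxx.
have adj c1 c2 : c1 < size C -> c2 < size C -> center e C x0 0 c1 -> center e C x0 0 c2 ->
  c1 = c2 \/ c2 = c1.+1 %% size C \/ c1 = c2.+1 %% size C.
  by move=> h1 h2 ce1 ce2; exact: (@centers_adj T e C noC5 Ccyc Codd C7 Cmin x0 0 n0 c1 c2 h1 h2 ce1 ce2).
have [b0 [b0n allowed]] : exists b0, b0 < size C /\ forall c, c < size C ->
    center e C x0 b0 c -> c = 0 \/ c = (size C).-1.
  case: (pickP (fun c : 'I_(size C) => center e C x0 0 c)) => [c hc|none].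
  - case hc1: (center e C x0 0 (c.+1 %% size C)).
    + exists (c.+1 %% size C); split; first by rewrite ltn_pmod.
      move=> c' hc' cc'.
      rewrite center_shift -center_mod in cc'.
      have d_lt : (c' + c.+1 %% size C) %% size C < size C by rewrite ltn_pmod.
      have A1 := adj _ _ d_lt (ltn_ord c) cc' hc.
      have A2 := adj _ _ d_lt (ltn_pmod _ n0) cc' hc1.
      exact: (ch1 C7 (ltn_ord c) hc' A1 A2).
    + exists (nat_of_ord c); split; first exact: ltn_ord.
      move=> c' hc' cc'.
      rewrite center_shift -center_mod in cc'.
      have d_lt : (c' + c) %% size C < size C by rewrite ltn_pmod.
      have A1 := adj _ _ d_lt (ltn_ord c) cc' hc.
      have A2 : (c' + c) %% size C != c.+1 %% size C.
        by apply/eqP => hh; rewrite hh hc1 in cc'.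
      exact: (ch2 C7 (ltn_ord c) hc' A1 A2).
  - exists 0; split => // c' hc' cc'.
    rewrite center_shift addn0 in cc'.
    by have := none (Ordinal hc'); rewrite /= cc'.
exact: (@key T e C esym noC5 Ccyc Codd C7 Cmin x0 b0 b0n allowed).
Qed.
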